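(* Let $\mathcal{L}$ be a language with semantic structure $\mathcal{S}=(\Sigma,I)$. (1) $P_{\mathcal{L}}=\mathrm{par}(\mathrm{AD}_{\mathcal{L}})$ and $\mathrm{pad}(P_{\mathcal{L}})=\mathrm{pad}(\mathrm{par}(\mathrm{AD}_{\mathcal{L}}))$. (2) For $P\in\mathrm{Part}(\Sigma)$: $P$ is strongly preserving for $\mathcal{L}$ iff $P\preceq\mathrm{par}(\mathrm{AD}_{\mathcal{L}})$ iff $\mathrm{pad}(P)\sqsubseteq\mathrm{AD}_{\mathcal{L}}$. (3) If $\mathcal{L}$ is closed under infinite logical conjunction, then $\mathrm{AD}_{\mathcal{L}}$ is partitioning if and only if $\mathcal{L}$ is closed under logical negation.
   Context: A language $\mathcal{L}$ has formulae $\varphi::=p\mid f(\varphi_1,\dots,\varphi_n)$, $p$ in a set of atoms, $f$ in a finite set of operators of arity $\ge1$; a semantic structure $\mathcal{S}=(\Sigma,I)$ interprets atoms as subsets of $\Sigma$ and operators as maps $\wp(\Sigma)^n\to\wp(\Sigma)$, giving compositionally the concrete semantics $[\![\varphi]\!]_{\mathcal{S}}\subseteq\Sigma$. Abstract domains of $\wp(\Sigma)_\subseteq$ are given by Galois insertions $(\alpha,\wp(\Sigma),A,\gamma)$ with closure $\mu_A=\gamma\circ\alpha$, identified when closures coincide, and ordered by $A_1\sqsubseteq A_2$ iff $\mu_{A_1}\le\mu_{A_2}$ pointwise. $\mathrm{AD}_{\mathcal{L}}$ is the abstract domain whose closure has as image all intersections of subfamilies of $\{[\![\varphi]\!]_{\mathcal{S}}\mid\varphi\in\mathcal{L}\}$.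 $\mathrm{Part}(\Sigma)$ is ordered by $P_1\preceq P_2$ iff each block of $P_1$ lies in a block of $P_2$. $\mathrm{pad}(P)$ is the abstract domain with closure $S\mapsto\bigcup\{B\in P\mid B\cap S\ne\varnothing\}$; $A$ is partitioning if it equals $\mathrm{pad}(P)$ for some $P$. $\mathrm{par}(A)$ is the partition into classes of $s\equiv s'\iff\alpha(\{s\})=\alpha(\{s'\})$. $P_{\mathcal{L}}$ is the partition induced by $s\equiv_{\mathcal{L}}s'\iff\forall\varphi.\,(s\in[\![\varphi]\!]_{\mathcal{S}}\Leftrightarrow s'\in[\![\varphi]\!]_{\mathcal{S}})$; $P$ is strongly preserving for $\mathcal{L}$ iff $P\preceq P_{\mathcal{L}}$. $\mathcal{L}$ is closed under infinite logical conjunction if for every $\Phi\subseteq\mathcal{L}$ (including $\varnothing$) some $\psi$ has $[\![\psi]\!]_{\mathcal{S}}=\bigcap_{\varphi\in\Phi}[\![\varphi]\!]_{\mathcal{S}}$; closed under negation if for every $\varphi$ some $\psi$ has $[\![\psi]\!]_{\mathcal{S}}=\Sigma\setminus[\![\varphi]\!]_{\mathcal{S}}$. *)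

(* Defs.v *)
From mathcomp Require Import all_boot.
From mathcomp Require Import classical_sets.

Set Implicit Arguments.
Unset Strict Implicit.
Unset Printing Implicit Defensive.

Local Open Scope classical_set_scope.

Record language := Language {
  atom : Type;
  op : finType;
  arity : op -> nat;
  arity_pos : forall f, 0 < arity f }.

Inductive formula (L : language) : Type :=
  | FAtom : atom L -> formula L
  | FOp : forall f : op L, ('I_(@arity L f) -> formula L) -> formula L.

Record structure (L : language) := Structure {
  state : Type;
  Iatom : atom L -> set state;
  Iop : forall f : op L, ('I_(@arity L f) -> set state) -> set state }.

Fixpoint sem {L : language} (S : structure L) (phi : formula L) : set (state S) :=
  match phi with
  | FAtom p => @Iatom L S p
  | FOp f args => @Iop L S f (fun i => @sem L S (args i))
  end.
Arguments sem {L} S phi.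

(* An abstract domain (up to the identification "same closure") is its closure
   mu_A = gamma o alpha : set Sigma -> set Sigma. *)
Definition absdom (T : Type) := set T -> set T.

Definition absdom_le (T : Type) (A1 A2 : absdom T) : Prop :=
  forall X, A1 X `<=` A2 X.

Definition moore_closure (T : Type) (M : set (set T)) : absdom T :=
  fun X => [set s | forall Y, M Y -> X `<=` Y -> Y s].

Definition intersections (T : Type) (F : set (set T)) : set (set T) :=
  [set X | exists G : set (set T), G `<=` F /\ X = [set s | forall Y, G Y -> Y s]].

Definition AD (L : language) (S : structure L) : absdom (state S) :=
  moore_closure (intersections [set sem S phi | phi in [set: formula L]]).

Definition is_partition (T : Type) (P : set (set T)) : Prop :=
  [/\ (forall B, P B -> B !=set0),
      (forall B C, P B -> P C -> B `&` C !=set0 -> B = C) &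
      (forall s, exists B, P B /\ B s)].

Definition part_le (T : Type) (P1 P2 : set (set T)) : Prop :=
  forall B, P1 B -> exists C, P2 C /\ B `<=` C.

Definition classes (T : Type) (R : T -> T -> Prop) : set (set T) :=
  [set B | exists s, B = [set s' | R s s']].

Definition pad (T : Type) (P : set (set T)) : absdom T :=
  fun X => [set s | exists B, [/\ P B, B `&` X !=set0 & B s]].

Definition partitioning (T : Type) (A : absdom T) : Prop :=
  exists P, is_partition P /\ A = pad P.

(* par(A): classes of s == s' iff alpha({s}) = alpha({s'}); since gamma is
   injective in a Galois insertion, this is mu_A({s}) = mu_A({s'}). *)
Definition par (T : Type) (A : absdom T) : set (set T) :=
  classes (fun s s' => A [set s] = A [set s']).

Definition P_L (L : language) (S : structure L) : set (set (state S)) :=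
  classes (fun s s' => forall phi : formula L, sem S phi s <-> sem S phi s').

Arguments P_L {L} S.
Arguments AD {L} S.

Definition strongly_preserving (L : language) (S : structure L)
  (P : set (set (state S))) : Prop := part_le P (P_L S).

(* Closure under infinite logical conjunction (including the empty one). *)
Definition closed_conj (L : language) (S : structure L) : Prop :=
  forall Phi : set (formula L), exists psi : formula L,
    sem S psi = [set s | forall phi, Phi phi -> sem S phi s].

Definition closed_neg (L : language) (S : structure L) : Prop :=
  forall phi : formula L, exists psi : formula L, sem S psi = ~` sem S phi.

(* Main.v *)
Require Import Defs.
From mathcomp Require Import all_boot.
From mathcomp Require Import classical_sets.
From mathcomp Require Import boolp.

Set Implicit Arguments.
Unset Strict Implicit.
Unset Printing Implicit Defensive.
Local Open Scope classical_set_scope.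

Lemma ADE (L : language) (S : structure L) X s :
  AD S X s <-> forall phi, X `<=` sem S phi -> sem S phi s.
Proof.
rewrite /AD /moore_closure /intersections /=; split.
- move=> H phi HX; apply: (H (sem S phi)) => //.
  exists [set sem S phi]; split.
    by move=> Y ->; exists phi.
  apply: funext => t; apply: propext; split.
    by move=> h Y ->.
  by move=> h; apply: h.
- move=> H Y [G [GF ->]] XY B GB.
  have [phi _ Ephi] := GF B GB; subst B.
  by apply: H => x Xx; apply: XY.
Qed.

Lemma par_eq (L : language) (S : structure L) : P_L S = par (AD S).
Proof.
rewrite /P_L /par /classes.
have E : forall s s', (forall phi, sem S phi s <-> sem S phi s') <->
                      AD S [set s] = AD S [set s'].
  move=> s s'; split.
  - move=> H; apply: funext => t; apply: propext; rewrite !ADE; split.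
    + move=> h phi hs; apply: h => x ->; apply: (proj2 (H phi)); exact: hs _ erefl.
    + move=> h phi hs; apply: h => x ->; apply: (proj1 (H phi)); exact: hs _ erefl.
  - move=> H phi.
    have h1 : AD S [set s'] s' by apply/ADE => phi0; apply.
    have h2 : AD S [set s] s by apply/ADE => phi0; apply.
    rewrite -H in h1; rewrite H in h2.
    split => hp.
    + by move/ADE: h1; apply => x ->.
    + by move/ADE: h2; apply => x ->.
apply: funext => B; apply: propext; split => -[s ->]; exists s;
  apply: funext => t; apply: propext; split => /E //.
Qed.

Lemma PL_partition (L : language) (S : structure L) : is_partition (P_L S).
Proof.
split.
- by move=> B [s ->]; exists s.
- move=> B C [s ->] [s' ->] [x [hx hx']].
  apply: funext => t; apply: propext; split => h phi.
  + by have := hx phi; have := hx' phi; have := h phi; tauto.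
  + by have := hx phi; have := hx' phi; have := h phi; tauto.
- move=> s; exists [set s' | forall phi, sem S phi s <-> sem S phi s']; split; first by exists s.
  by move=> phi.
Qed.

Theorem proposition5p6 (L : language) (S : structure L) :
  [/\ P_L S = par (AD S) /\ pad (P_L S) = pad (par (AD S)),
      (forall P : set (set (state S)), is_partition P ->
         (strongly_preserving P <-> part_le P (par (AD S))) /\
         (part_le P (par (AD S)) <-> absdom_le (pad P) (AD S)))
    & (closed_conj S -> (partitioning (AD S) <-> closed_neg S))].
Proof.
have PE := par_eq S.
split.
- by rewrite PE.
- move=> P [Pne Pdis Pcov]; rewrite /strongly_preserving -PE; split => //.
  split.
  + move=> H X s [B [PB [x [Bx Xx]] Bs]].
    have [C [[s0 ->] BC]] := H B PB.
    apply/ADE => phi Xphi.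
    have := BC x Bx; have := BC s Bs; move=> h1 h2.
    apply/h1/h2; exact: Xphi.
  + move=> H B PB.
    have [b Bb] := Pne B PB.
    exists [set s' | forall phi, sem S phi b <-> sem S phi s']; split.
      by exists b.
    move=> s Bs phi; split => hp.
    * have : AD S [set b] s by apply: H; exists B; split => //; exists b.
      by move/ADE; apply => x ->.
    * have : AD S [set s] b by apply: H; exists B; split => //; exists s.
      by move/ADE; apply => x ->.
- move=> Hconj; split.
  + move=> [P [[Pne Pdis Pcov] HA]] phi.
    have [theta Htheta] := Hconj [set chi | ~` sem S phi `<=` sem S chi].
    exists theta; rewrite Htheta.
    have Hfix : AD S (sem S phi) = sem S phi.
      apply: funext => t; apply: propext; split.
        by move/ADE; apply.
      by move=> h; apply/ADE => phi0; apply.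
    have E : AD S (~` sem S phi) = ~` sem S phi.
      rewrite HA; apply: funext => t; apply: propext; split.
      * move=> [B [PB [x [Bx Cx]] Bt]] ht.
        apply: Cx; rewrite -Hfix HA.
        by exists B; split => //; exists t.
      * move=> Ct; have [B [PB Bt]] := Pcov t.
        by exists B; split => //; exists t.
    rewrite -[RHS]E; apply: funext => t; apply: propext.
    split => h; [apply/ADE => chi hc; exact: h | move/ADE: h => h chi hc; exact: h].
  + move=> Hneg.
    exists (P_L S); split; first exact: PL_partition.
    apply: funext => X; apply: funext => s; apply: propext; split; last first.
      move=> [B [[s0 ->] [x [hx Xx]] hs]].
      apply/ADE => phi Xphi; apply/hs/hx; exact: Xphi.
    move=> H; apply: contrapT => Hn.
    have [theta Htheta] := Hconj [set chi | sem S chi s].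
    have [eta Heta] := Hneg theta.
    have Xeta : X `<=` sem S eta.
      move=> x Xx; rewrite Heta Htheta /= => hx.
      apply: Hn; exists [set s' | forall phi, sem S phi s <-> sem S phi s'].
      split; first by exists s.
        exists x; split => //= phi; split => hp.
          exact: hx.
        apply: contrapT => hn.
        have [psi Hpsi] := Hneg phi.
        have : sem S psi s by rewrite Hpsi.
        move/hx; rewrite Hpsi; exact.
      by [].
    have := (proj1 (ADE X s) H) eta Xeta.
    by rewrite Heta Htheta /=; apply => chi.
Qed.
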